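(* Let $H$ be a group and $A$ an abelian group. Associating to a central extension $1 \to A \to G \to H \to 1$ its extension cocycle class in $\mathrm{H}^2(H, A)$ yields a bijection between (i) isomorphism classes of groups $G$ with $\mathcal{Z}(G) \cong A$ and $G/\mathcal{Z}(G) \cong H$, and (ii) $\mathrm{Aut}(H) \times \mathrm{Aut}(A)$-orbits of classes of centrally non-degenerate cocycles in $\mathrm{H}^2(H, A)$.
   Context: Given a central extension $1\to A\to G\to H\to 1$ and a section $s: H \to G$, the extension cocycle is $\sigma(h_1,h_2) = s(h_1h_2)^{-1}s(h_1)s(h_2) \in A$; its class in $\mathrm{H}^2(H,A)$ (trivial action) is independent of $s$. The group $\mathrm{Aut}(H)\times\mathrm{Aut}(A)$ acts on $\mathrm{H}^2(H,A)$ via $\rho \mapsto \psi_A \circ \rho \circ (\psi_H \times \psi_H)$ for $\psi_H\in\mathrm{Aut}(H)$, $\psi_A\in\mathrm{Aut}(A)$, $\rho \in \mathrm{Z}^2(H,A)$. A 2-cocycle $\sigma \in \mathrm{Z}^2(H,A)$ is called centrally non-degenerate if for every non-trivial $g \in \mathcal{Z}(H)$ there is $h \in H$ with $\sigma(g,h) \neq \sigma(h,g)$. *)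

(* Defs.v *)
(* abstract (possibly infinite) groups are mathcomp's
   [groupType] (boot/monoid.v); the abelian group A is a [zmodType]
   (written additively). *)
From HB Require Import structures.
From mathcomp Require Import all_boot ssralg.

Set Implicit Arguments.
Unset Strict Implicit.
Unset Printing Implicit Defensive.

Local Open Scope group_scope.

Definition grp_hom (G1 G2 : groupType) (f : G1 -> G2) : Prop :=
  {morph f : x y / x * y}.

Definition grp_isomorphic (G1 G2 : groupType) : Prop :=
  exists f : G1 -> G2, grp_hom f /\ bijective f.

Definition grp_aut (H : groupType) (psi : H -> H) : Prop :=
  grp_hom psi /\ bijective psi.

Definition zmod_aut (A : zmodType) (psi : A -> A) : Prop :=
  {morph psi : a b / (a + b)%R} /\ bijective psi.

Definition in_center (G : groupType) (g : G) : Prop :=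
  forall x : G, g * x = x * g.

(* [center_data iota pi] : the central extension 1 -> A -iota-> G -pi-> H -> 1
   in which iota identifies A with Z(G) and pi identifies G/Z(G) with H
   (iota is an injective hom with image exactly Z(G); pi is a surjective hom
   with kernel exactly Z(G), i.e. it induces G/Z(G) ~= H). *)
Definition center_data (H : groupType) (A : zmodType) (G : groupType)
    (iota : A -> G) (pi : G -> H) : Prop :=
  [/\ {morph iota : a b / (a + b)%R >-> a * b},
      injective iota &
      (forall g : G, in_center g <-> exists a, iota a = g)] /\
  [/\ grp_hom pi,
      (forall h : H, exists g, pi g = h) &
      (forall g : G, pi g = 1 <-> in_center g)].

Definition ext_cocycle (H : groupType) (A : zmodType) (G : groupType)
    (iota : A -> G) (pi : G -> H) (sigma : H -> H -> A) : Prop :=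
  exists s : H -> G, (forall h, pi (s h) = h) /\
    forall h1 h2 : H, iota (sigma h1 h2) = (s (h1 * h2))^-1 * (s h1 * s h2).

Definition cocycle2 (H : groupType) (A : zmodType) (sigma : H -> H -> A) : Prop :=
  forall h1 h2 h3 : H,
    (sigma h1 h2 + sigma (h1 * h2)%g h3 = sigma h2 h3 + sigma h1 (h2 * h3)%g)%R.

(* equality of classes in H^2(H, A): difference is a coboundary *)
Definition cohomologous (H : groupType) (A : zmodType) (sigma tau : H -> H -> A) : Prop :=
  exists f : H -> A, forall h1 h2 : H,
    tau h1 h2 = (sigma h1 h2 + (f h1 + f h2 - f (h1 * h2)%g))%R.

Definition aut_act (H : groupType) (A : zmodType) (psiH : H -> H) (psiA : A -> A)
    (rho : H -> H -> A) : H -> H -> A :=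
  fun h1 h2 => psiA (rho (psiH h1) (psiH h2)).

Definition same_orbit (H : groupType) (A : zmodType) (sigma tau : H -> H -> A) : Prop :=
  exists (psiH : H -> H) (psiA : A -> A),
    [/\ grp_aut psiH, zmod_aut psiA & cohomologous (aut_act psiH psiA sigma) tau].

Definition centrally_nondegenerate (H : groupType) (A : zmodType)
    (sigma : H -> H -> A) : Prop :=
  forall g : H, in_center g -> g <> 1 -> exists h : H, sigma g h <> sigma h g.

(* Main.v *)
Require Import Defs.
From HB Require Import structures.
From mathcomp Require Import all_boot ssralg ssrAC.
From Stdlib Require Import Classical IndefiniteDescription.

Set Implicit Arguments.
Unset Strict Implicit.
Unset Printing Implicit Defensive.
Import GRing.Theory.
Local Open Scope group_scope.

Lemma fchoice (X Y : Type) (P : X -> Y -> Prop) :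
  (forall x, exists y, P x y) -> exists f : X -> Y, forall x, P x (f x).
Proof.
move=> h; exists (fun x => proj1_sig (constructive_indefinite_description _ (h x))).
by move=> x; exact: proj2_sig _.
Qed.

Lemma zeq1 (A : zmodType) (x c1 c2 c12 p : A) :
  (x + c1 + c2 = c12 + p -> x = p + (-c1 - c2 - - c12))%R.
Proof.
move=> e; rewrite opprK.
have -> : x = (x + c1 + c2 - c2 - c1)%R by rewrite !addrK.
by rewrite e [LHS](ACl (2*((4*3)*1))).
Qed.

Lemma zeq2 (A : zmodType) (P u v w a b : A) :
  (P + (u + v - w) + a + b + w = P + (a + u) + (b + v))%R.
Proof. by rewrite !addrA [LHS](ACl ((1*5*2*6*3)*(4*7))) /= addNr addr0. Qed.

Lemma hom1 (G1 G2 : groupType) (f : G1 -> G2) : grp_hom f -> f 1 = 1.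
Proof. by move=> hf; apply: (mulgI (f 1)); rewrite -hf !mulg1. Qed.

Lemma homV (G1 G2 : groupType) (f : G1 -> G2) : grp_hom f -> forall x, f x^-1 = (f x)^-1.
Proof.
move=> hf x; apply: (mulgI (f x)); rewrite -hf !mulgV; exact: hom1.
Qed.

Section Ext.
Variables (H : groupType) (A : zmodType) (G : groupType) (iota : A -> G) (pi : G -> H).
Hypothesis cd : center_data iota pi.

Lemma iotaD a b : iota (a + b)%R = iota a * iota b.
Proof. by case: cd => -[]. Qed.
Lemma iota_inj : injective iota.
Proof. by case: cd => -[]. Qed.
Lemma piM : grp_hom pi.
Proof. by case: cd => _ []. Qed.
Lemma pi_surj h : exists g, pi g = h.
Proof. by case: cd => _ []. Qed.
Lemma pi1_center g : pi g = 1 <-> in_center g.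
Proof. by case: cd => _ []. Qed.
Lemma center_iota g : in_center g <-> exists a, iota a = g.
Proof. by case: cd => -[]. Qed.

Lemma iota0 : iota 0%R = 1.
Proof. by apply: (mulgI (iota 0%R)); rewrite -iotaD addr0 mulg1. Qed.
Lemma iota_c a x : iota a * x = x * iota a.
Proof. by apply: (center_iota (iota a)).2; exists a. Qed.
Lemma pi_iota a : pi (iota a) = 1.
Proof. by apply/pi1_center/center_iota; exists a. Qed.
Lemma pi_1 : pi 1 = 1.
Proof. exact: hom1 piM. Qed.
Lemma piV x : pi x^-1 = (pi x)^-1.
Proof. exact: (homV piM x). Qed.

Lemma exists_j : exists j : G -> A, forall g, pi g = 1 -> iota (j g) = g.
Proof.
apply: (@fchoice _ _ (fun g a => pi g = 1 -> iota a = g)) => g; case: (classic (pi g = 1)) => hg.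
  by have [a ha] := (center_iota g).1 ((pi1_center g).1 hg); exists a.
by exists 0%R.
Qed.

Lemma exists_s : exists s : H -> G, forall h, pi (s h) = h.
Proof. exact: fchoice pi_surj. Qed.

Lemma part1 : exists sigma, ext_cocycle iota pi sigma.
Proof.
have [s hs] := exists_s; have [j hj] := exists_j.
exists (fun h1 h2 => j ((s (h1 * h2))^-1 * (s h1 * s h2))); exists s; split => // h1 h2.
by apply: hj; rewrite !piM piV !hs mulVg.
Qed.

Variables (s : H -> G) (j : G -> A) (sigma : H -> H -> A).
Hypotheses (hs : forall h, pi (s h) = h) (hj : forall g, pi g = 1 -> iota (j g) = g)
  (hsig : forall h1 h2 : H, iota (sigma h1 h2) = (s (h1 * h2))^-1 * (s h1 * s h2)).

Definition mk h a := s h * iota a.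
Definition Aof g := j ((s (pi g))^-1 * g).

Lemma jK a : j (iota a) = a.
Proof. by apply: iota_inj; rewrite hj // pi_iota. Qed.

Lemma Pmk h a : pi (mk h a) = h.
Proof. by rewrite /mk piM pi_iota mulg1 hs. Qed.

Lemma Amk h a : Aof (mk h a) = a.
Proof. by rewrite /Aof Pmk /mk mulKg jK. Qed.

Lemma mkK g : mk (pi g) (Aof g) = g.
Proof.
rewrite /mk /Aof hj; first by rewrite mulVKg.
by rewrite piM piV hs mulVg.
Qed.

Lemma mk_inj h a k b : mk h a = mk k b -> h = k /\ a = b.
Proof. by move=> e; split; [rewrite -(Pmk h a) e Pmk | rewrite -(Amk h a) e Amk]. Qed.

Lemma s_mk h : s h = mk h 0%R.
Proof. by rewrite /mk iota0 mulg1. Qed.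

Lemma ss h k : s h * s k = s (h * k) * iota (sigma h k).
Proof. by rewrite hsig mulVKg. Qed.

Lemma mkI h a b : mk h a * iota b = mk h (a + b)%R.
Proof. by rewrite /mk iotaD mulgA. Qed.

Lemma mkM h a k b : mk h a * mk k b = mk (h * k) (sigma h k + a + b)%R.
Proof.
rewrite /mk -mulgA [iota a * (_ * _)]mulgA (iota_c a (s k)) -[s k * _ * _]mulgA.
by rewrite mulgA ss -mulgA -!iotaD addrA.
Qed.

Lemma part2 : cocycle2 sigma /\ centrally_nondegenerate sigma.
Proof.
split.
  move=> h1 h2 h3.
  have e := mulgA (mk h1 0%R) (mk h2 0%R) (mk h3 0%R).
  rewrite !mkM mulgA in e; have [_ {}e] := mk_inj e.
  by rewrite !addr0 in e; rewrite addrC -e addrC.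
move=> g gc g1; apply: NNPP => hn.
have hall : forall h, sigma g h = sigma h g.
  by move=> h; apply: NNPP => ne; apply: hn; exists h.
apply: g1; rewrite -(hs g); apply/pi1_center => x.
by rewrite -(mkK x) s_mk !mkM hall (gc (pi x)) !addr0.
Qed.

End Ext.

Lemma Kl (G1 G2 H1 H2 : groupType) (p1 : G1 -> H1) (p2 : G2 -> H2) (F : G1 -> G2) :
  grp_hom p1 -> grp_hom p2 -> grp_hom F ->
  (forall g, p1 g = 1 -> p2 (F g) = 1) -> forall x y, p1 x = p1 y -> p2 (F x) = p2 (F y).
Proof.
move=> h1 h2 hF hc x y e.
have -> : y = x * (x^-1 * y) by rewrite mulVKg.
rewrite hF h2 (hc (x^-1 * y)) ?mulg1 //.
by rewrite h1 (homV h1) e mulVg.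
Qed.

Section Iso.
Variables (H : groupType) (A : zmodType).
Variables (G1 : groupType) (iota1 : A -> G1) (pi1 : G1 -> H) (cd1 : center_data iota1 pi1).
Variables (s1 : H -> G1) (j1 : G1 -> A) (sigma1 : H -> H -> A).
Hypotheses (hs1 : forall h, pi1 (s1 h) = h) (hj1 : forall g, pi1 g = 1 -> iota1 (j1 g) = g)
  (hsig1 : forall h1 h2 : H, iota1 (sigma1 h1 h2) = (s1 (h1 * h2))^-1 * (s1 h1 * s1 h2)).
Variables (G2 : groupType) (iota2 : A -> G2) (pi2 : G2 -> H) (cd2 : center_data iota2 pi2).
Variables (s2 : H -> G2) (j2 : G2 -> A) (sigma2 : H -> H -> A).
Hypotheses (hs2 : forall h, pi2 (s2 h) = h) (hj2 : forall g, pi2 g = 1 -> iota2 (j2 g) = g)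
  (hsig2 : forall h1 h2 : H, iota2 (sigma2 h1 h2) = (s2 (h1 * h2))^-1 * (s2 h1 * s2 h2)).

Lemma fwd : grp_isomorphic G1 G2 -> same_orbit sigma1 sigma2.
Proof.
case=> f [fM [finv fK fKV]].
have finvM : grp_hom finv.
  by move=> x y; apply: (can_inj fK); rewrite fKV fM !fKV.
have fC : forall g, pi1 g = 1 -> pi2 (f g) = 1.
  move=> g /(pi1_center cd1) gc; apply/(pi1_center cd2) => x.
  by rewrite -(fKV x) -!fM gc.
have fiC : forall g, pi2 g = 1 -> pi1 (finv g) = 1.
  move=> g /(pi1_center cd2) gc; apply/(pi1_center cd1) => x.
  by rewrite -(fK x) -!finvM gc.
have Kf := Kl (piM cd1) (piM cd2) fM fC.
have Kfi := Kl (piM cd2) (piM cd1) finvM fiC.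
pose psiA a := j2 (f (iota1 a)).
have iA : forall a, iota2 (psiA a) = f (iota1 a).
  by move=> a; rewrite hj2 // fC // (pi_iota cd1).
pose psiAi a := j1 (finv (iota2 a)).
have iAi : forall a, iota1 (psiAi a) = finv (iota2 a).
  by move=> a; rewrite hj1 // fiC // (pi_iota cd2).
pose psiH k := pi1 (finv (s2 k)).
pose phi h := pi2 (f (s1 h)).
have phiK : cancel psiH phi.
  move=> k; rewrite /phi /psiH (Kf (s1 (pi1 (finv (s2 k)))) (finv (s2 k))) ?hs1 //.
  by rewrite fKV hs2.
have psiK : cancel phi psiH.
  move=> h; rewrite /phi /psiH (Kfi (s2 (pi2 (f (s1 h)))) (f (s1 h))) ?hs2 //.
  by rewrite fK hs1.
have psiM : grp_hom psiH.
  move=> k1 k2; rewrite /psiH (Kfi (s2 (k1 * k2)) (s2 k1 * s2 k2)).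
    by rewrite finvM (piM cd1).
  by rewrite (piM cd2) !hs2.
exists psiH, psiA; split.
- by split => //; exists phi.
- split.
    move=> a b; apply: (iota_inj cd2).
    by rewrite iA (iotaD cd2) !iA (iotaD cd1) fM.
  exists psiAi.
    move=> a; apply: (iota_inj cd1); rewrite iAi iA; exact: fK.
  move=> a; apply: (iota_inj cd2); rewrite iA iAi; exact: fKV.
pose t h := f (s1 (psiH h)).
pose c h := Aof pi2 s2 j2 (t h).
have tE : forall h, t h = mk iota2 s2 h (c h).
  by move=> h; rewrite /c -{1}(mkK cd2 hs2 hj2 (t h)) /t -/(phi _) phiK.
exists (fun h => - c h)%R => h1 h2; rewrite /aut_act.
have e1 : t h1 * t h2 = mk iota2 s2 (h1 * h2) (sigma2 h1 h2 + c h1 + c h2)%R.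
  by rewrite !tE (mkM cd2 hsig2).
have e2 : t h1 * t h2 = mk iota2 s2 (h1 * h2) (c (h1 * h2)%g + psiA (sigma1 (psiH h1) (psiH h2)))%R.
  rewrite /t -fM (ss hsig1) fM -psiM -/(t _) tE -iA.
  by rewrite (mkI cd2).
have [_ e] := mk_inj cd2 hs2 hj2 (etrans (esym e1) e2).
exact: zeq1 e.
Qed.
Lemma bwd : same_orbit sigma1 sigma2 -> grp_isomorphic G1 G2.
Proof.
case=> psiH [psiA [[psiHM [phi psiK phiK]] [psiAM [psiAi pAK pAiK]] [F hF]]].
pose Th g := mk iota1 s1 (psiH (pi2 g)) (psiAi (Aof pi2 s2 j2 g + F (pi2 g))%R).
have ThE : forall h a, Th (mk iota2 s2 h a) = mk iota1 s1 (psiH h) (psiAi (a + F h)%R).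
  by move=> h a; rewrite /Th (Pmk cd2 hs2) (Amk cd2 hs2 hj2).
pose La g := mk iota2 s2 (phi (pi1 g)) (psiA (Aof pi1 s1 j1 g) - F (phi (pi1 g)))%R.
have LaE : forall h a, La (mk iota1 s1 h a) = mk iota2 s2 (phi h) (psiA a - F (phi h))%R.
  by move=> h a; rewrite /La (Pmk cd1 hs1) (Amk cd1 hs1 hj1).
have ThK : cancel Th La.
  by move=> g; rewrite -(mkK cd2 hs2 hj2 g) ThE LaE psiK pAiK addrK.
have LaK : cancel La Th.
  by move=> g; rewrite -(mkK cd1 hs1 hj1 g) LaE ThE phiK subrK pAK.
have ThM : grp_hom Th.
  move=> x y; rewrite -(mkK cd2 hs2 hj2 x) -(mkK cd2 hs2 hj2 y) (mkM cd2 hsig2) !ThE.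
  rewrite (mkM cd1 hsig1) psiHM; congr (mk _ _ _ _).
  apply: (can_inj pAK); rewrite pAiK !psiAM !pAiK hF /aut_act.

  exact: zeq2.
exists La; split; last by exists Th.
by move=> x y; rewrite -{1}(LaK x) -{1}(LaK y) -ThM ThK.
Qed.

End Iso.

Section Cons.
Variables (H : groupType) (A : zmodType) (sigma : H -> H -> A).
Hypothesis Hc : cocycle2 sigma.

Definition extT (_ : cocycle2 sigma) : Type := (A * H)%type.
Local Notation T := (extT Hc).
HB.instance Definition _ := Choice.on T.

Local Notation e11 := (sigma 1 1).

Lemma sig1l k : sigma 1 k = e11.
Proof.
have := Hc 1 1 k; rewrite !mul1g => e.
by apply: (addIr (sigma 1 k)); rewrite e.
Qed.

Lemma sig1r h : sigma h 1 = e11.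
Proof.
have := Hc h 1 1; rewrite !mulg1 => e.
by apply: (addIr (sigma h 1)); rewrite e addrC.
Qed.

Lemma sigVC h : sigma h^-1 h = sigma h h^-1.
Proof.
have := Hc h h^-1 h; rewrite mulgV mulVg sig1l sig1r => e.
by apply: (addIr e11); rewrite e.
Qed.

Definition ext_one : T := ((- e11)%R, 1).
Definition ext_mul (x y : T) : T := ((x.1 + y.1 + sigma x.2 y.2)%R, x.2 * y.2).
Definition ext_inv (x : T) : T := ((- e11 - x.1 - sigma x.2^-1 x.2)%R, x.2^-1).

Lemma ext_mulA : associative ext_mul.
Proof.
move=> [a h] [b k] [c l]; rewrite /ext_mul /=; congr pair; last by rewrite mulgA.
have := Hc h k l => e.
rewrite !addrA [RHS](ACl (1*2*4*(3*5))) [LHS](ACl (1*2*3*(4*5))) /=.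

by rewrite e.
Qed.

Lemma ext_mul1 : left_id ext_one ext_mul.
Proof.
move=> [b k]; rewrite /ext_mul /=; congr pair; last by rewrite mul1g.
by rewrite sig1l addrC addrA addrN add0r.
Qed.

Lemma ext_mulg1 : right_id ext_one ext_mul.
Proof.
move=> [b k]; rewrite /ext_mul /=; congr pair; last by rewrite mulg1.
by rewrite sig1r subrK.
Qed.

Lemma ext_mulV : left_inverse ext_one ext_inv ext_mul.
Proof.
move=> [a h]; rewrite /ext_mul /ext_inv /ext_one /=; congr pair; last by rewrite mulVg.
by rewrite [LHS](ACl (1*(2*4)*(3*5))) /= !addNr !addr0.
Qed.

Lemma ext_mulgV : right_inverse ext_one ext_inv ext_mul.
Proof.
move=> [a h]; rewrite /ext_mul /ext_inv /ext_one /=; congr pair; last by rewrite mulgV.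
by rewrite sigVC !addrA [LHS](ACl (2*(1*3)*(4*5))) /= addrN addNr !addr0.
Qed.

HB.instance Definition _ := isGroup.Build T ext_mulA ext_mul1 ext_mulg1 ext_mulV ext_mulgV.

Definition extG : groupType := T.

Lemma mulE (x y : extG) : x * y = ((x.1 + y.1 + sigma x.2 y.2)%R, x.2 * y.2).
Proof. by []. Qed.

Definition ext_iota (a : A) : extG := ((a - e11)%R, 1).
Definition ext_pi (x : extG) : H := x.2.
Definition ext_s (h : H) : extG := (0%R, h).

Lemma ext_iota_c a : in_center (ext_iota a).
Proof.
move=> [b k]; rewrite !mulE /= sig1l sig1r mul1g mulg1; congr pair.
by rewrite (addrC (a - e11)%R b).
Qed.

Hypothesis Hn : centrally_nondegenerate sigma.

Lemma ext_center (g : extG) : in_center g <-> exists a, ext_iota a = g.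
Proof.
split; last by case=> a <-; exact: ext_iota_c.
case: g => a h gc.
have hk : forall k, h * k = k * h /\ sigma h k = sigma k h.
  move=> k; have := gc (0%R, k); rewrite !mulE /= addr0 add0r.
  by case=> e1 e2; split => //; apply: (addrI a).
have h1 : h = 1.
  apply: NNPP => hn.
  have [k] := Hn (fun k => (hk k).1) hn.
  by rewrite (hk k).2.
by exists (a + e11)%R; rewrite /ext_iota addrK h1.
Qed.

Lemma ext_cd : center_data ext_iota ext_pi.
Proof.
split; split.
- move=> a b; rewrite mulE /ext_iota /= mulg1; congr pair.
  by rewrite !addrA subrK addrAC.
- by move=> a b [] /addIr.
- exact: ext_center.
- by [].
- by move=> h; exists (0%R, h).
- move=> [a h]; rewrite /ext_pi /=; split.

    by move=> e; subst h; apply/ext_center; exists (a + e11)%R; rewrite /ext_iota addrK.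
  by case/ext_center => b [_ <-].
Qed.

Lemma ext_coc : ext_cocycle ext_iota ext_pi sigma.
Proof.
exists ext_s; split => // h1 h2.
apply: (mulgI (ext_s (h1 * h2))); rewrite mulVKg !mulE /= sig1r mulg1.
by rewrite !add0r subrK.
Qed.

End Cons.

Lemma part4 (H : groupType) (A : zmodType) (sigma : H -> H -> A) :
  cocycle2 sigma -> centrally_nondegenerate sigma ->
  exists (G : groupType) (iota : A -> G) (pi : G -> H),
    center_data iota pi /\ ext_cocycle iota pi sigma.
Proof.
move=> Hc Hn; exists (extG Hc), (ext_iota Hc), (ext_pi (Hc := Hc)).
split; [exact: ext_cd | exact: ext_coc].
Qed.

Theorem theorem2p8 (H : groupType) (A : zmodType) :
  (* the map is defined: every such G carries an extension cocycle *)
  (forall (G : groupType) (iota : A -> G) (pi : G -> H),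
      center_data iota pi -> exists sigma, ext_cocycle iota pi sigma) /\
  (* it lands in classes of centrally non-degenerate cocycles *)
  (forall (G : groupType) (iota : A -> G) (pi : G -> H) (sigma : H -> H -> A),
      center_data iota pi -> ext_cocycle iota pi sigma ->
      cocycle2 sigma /\ centrally_nondegenerate sigma) /\
  (* well-defined on isomorphism classes and injective *)
  (forall (G1 : groupType) (iota1 : A -> G1) (pi1 : G1 -> H) (sigma1 : H -> H -> A)
          (G2 : groupType) (iota2 : A -> G2) (pi2 : G2 -> H) (sigma2 : H -> H -> A),
      center_data iota1 pi1 -> ext_cocycle iota1 pi1 sigma1 ->
      center_data iota2 pi2 -> ext_cocycle iota2 pi2 sigma2 ->
      (grp_isomorphic G1 G2 <-> same_orbit sigma1 sigma2)) /\
  (* surjective *)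
  (forall sigma : H -> H -> A,
      cocycle2 sigma -> centrally_nondegenerate sigma ->
      exists (G : groupType) (iota : A -> G) (pi : G -> H),
        center_data iota pi /\ ext_cocycle iota pi sigma).
Proof.
split.
  by move=> G iota pi cd; exact: part1 cd.
split.
  move=> G iota pi sigma cd [s [hs hsig]]; have [j hj] := exists_j cd.
  exact: (@part2 _ _ _ _ _ cd _ _ _ hs hj hsig).
split.
  move=> G1 iota1 pi1 sigma1 G2 iota2 pi2 sigma2 cd1 [s1 [hs1 hsig1]] cd2 [s2 [hs2 hsig2]].
  have [j1 hj1] := exists_j cd1; have [j2 hj2] := exists_j cd2.
  split; [exact: (fwd cd1 hs1 hj1 hsig1 cd2 hs2 hj2 hsig2) | exact: (bwd cd1 hs1 hj1 hsig1 cd2 hs2 hj2 hsig2)].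
exact: part4.
Qed.
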